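(* Let $N\ge1$, $f_1,\dots,f_N,g_1,\dots,g_N\in\mathbb C$ with $S:=\sum_{n=1}^N|f_n||g_n|>0$, and let $P^{\max}>0$, $\sigma^2>0$, $L_0>0$, $d_{\mathrm t},d_{\mathrm r}>0$, $\alpha,\beta>0$. Set $\varrho_g^2=L_0d_{\mathrm t}^{-\alpha}$, $\varrho_f^2=L_0d_{\mathrm r}^{-\beta}$, $\sigma_v^2=\sigma^2$, $P_{\mathrm{BS\text{-}P}}^{\max}=P^{\max}$ and $P_{\mathrm{BS\text{-}A}}^{\max}=P_{\mathrm A}^{\max}=P^{\max}/2$. Define $$\gamma_{\mathrm{passive}}=\frac{P_{\mathrm{BS\text{-}P}}^{\max}S^2}{\sigma^2},\qquad \gamma_{\mathrm{active}}=\frac{P_{\mathrm{BS\text{-}A}}^{\max}P_{\mathrm A}^{\max}S^2}{N\left(P_{\mathrm A}^{\max}\sigma_v^2\varrho_f^2+P_{\mathrm{BS\text{-}A}}^{\max}\sigma^2\varrho_g^2+\sigma^2\sigma_v^2\right)}.$$ If $\gamma_{\mathrm{active}}\ge\gamma_{\mathrm{passive}}$, then $P^{\max}>4N\sigma^2$ and $$\frac{1}{d_{\mathrm t}^{-\alpha}+d_{\mathrm r}^{-\beta}}\ \ge\ \frac{2NP^{\max}L_0}{P^{\max}-4N\sigma^2}.$$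
   Context: Two single-user single-antenna systems aided by an $N$-element RIS; $g_n$ are BS–RIS and $f_n$ RIS–user channel coefficients, with far-field path losses $\varrho_g^2=L_0d_{\mathrm t}^{-\alpha}$ (BS–RIS distance $d_{\mathrm t}$, exponent $\alpha$) and $\varrho_f^2=L_0d_{\mathrm r}^{-\beta}$ (RIS–user distance $d_{\mathrm r}$, exponent $\beta$), $L_0$ the path loss at 1 m, total radiated power $P^{\max}$. $\gamma_{\mathrm{passive}}$ is the maximal SNR with a passive RIS; the exact maximal SNR with an active RIS (equal amplification, RIS noise power $\sigma_v^2$) is $\frac{P_{\mathrm{BS\text{-}A}}^{\max}P_{\mathrm A}^{\max}S^2}{P_{\mathrm A}^{\max}\sigma_v^2\sum_n|f_n|^2+\sigma^2(P_{\mathrm{BS\text{-}A}}^{\max}\sum_n|g_n|^2+N\sigma_v^2)}$, and $\gamma_{\mathrm{active}}$ above is this with $\frac1N\sum_n|f_n|^2$ and $\frac1N\sum_n|g_n|^2$ replaced by $\varrho_f^2$ and $\varrho_g^2$ (large-$N$ approximation). *)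

(* Defs.v *)
From Stdlib Require Import Reals.
From Coquelicot Require Import Coquelicot.
Open Scope R_scope.

(* S = sum_{n=1}^N |f_n| |g_n|, with indices shifted to 0..N-1. *)
Definition S_sum (N : nat) (f g : nat -> C) : R :=
  sum_n (fun n => Cmod (f n) * Cmod (g n)) (N - 1)%nat.

Definition gamma_passive (PBSP sigma2 S : R) : R := PBSP * S ^ 2 / sigma2.

Definition gamma_active (N : nat) (PBSA PA sigma2 sigmav2 rhof2 rhog2 S : R) : R :=
  PBSA * PA * S ^ 2 /
  (INR N * (PA * sigmav2 * rhof2 + PBSA * sigma2 * rhog2 + sigma2 * sigmav2)).

(* Main.v *)
Require Import Defs.
From Stdlib Require Import Reals Lra Psatz.
From Coquelicot Require Import Coquelicot.
Open Scope R_scope.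

Theorem lemma4 (N : nat) (f g : nat -> C)
  (Pmax sigma2 L0 dt dr alpha beta : R) :
  (1 <= N)%nat ->
  0 < S_sum N f g ->
  0 < Pmax -> 0 < sigma2 -> 0 < L0 -> 0 < dt -> 0 < dr -> 0 < alpha -> 0 < beta ->
  let rhog2 := L0 * Rpower dt (- alpha) in
  let rhof2 := L0 * Rpower dr (- beta) in
  let sigmav2 := sigma2 in
  let PBSP := Pmax in
  let PBSA := Pmax / 2 in
  let PA := Pmax / 2 in
  gamma_active N PBSA PA sigma2 sigmav2 rhof2 rhog2 (S_sum N f g)
    >= gamma_passive PBSP sigma2 (S_sum N f g) ->
  Pmax > 4 * INR N * sigma2 /\
  1 / (Rpower dt (- alpha) + Rpower dr (- beta))
    >= 2 * INR N * Pmax * L0 / (Pmax - 4 * INR N * sigma2).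
Proof.
  intros HN HS HP Hs HL Hdt Hdr Ha Hb rhog2 rhof2 sigmav2 PBSP PBSA PA H.
  unfold gamma_active, gamma_passive, rhog2, rhof2, sigmav2, PBSP, PBSA, PA in H.
  assert (Hn : 1 <= INR N) by (apply (le_INR 1); exact HN).
  assert (Ha' : 0 < Rpower dt (- alpha)) by (unfold Rpower; apply exp_pos).
  assert (Hb' : 0 < Rpower dr (- beta)) by (unfold Rpower; apply exp_pos).
  set (a := Rpower dt (- alpha)) in *.
  set (b := Rpower dr (- beta)) in *.
  set (S := S_sum N f g) in *.
  set (n := INR N) in *.
  set (D := n * (Pmax / 2 * sigma2 * (L0 * b) + Pmax / 2 * sigma2 * (L0 * a) + sigma2 * sigma2)).
  fold D in H.
  assert (HD : 0 < D).
  { unfold D. apply Rmult_lt_0_compat; [lra|].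
    assert (0 < Pmax / 2 * sigma2 * (L0 * b)) by (repeat apply Rmult_lt_0_compat; lra).
    assert (0 < Pmax / 2 * sigma2 * (L0 * a)) by (repeat apply Rmult_lt_0_compat; lra).
    nra. }
  assert (K : Pmax * S ^ 2 * D <= Pmax / 2 * (Pmax / 2) * S ^ 2 * sigma2).
  { apply Rge_le in H.
    apply (Rmult_le_compat_r (D * sigma2)) in H; [|nra].
    replace (Pmax * S ^ 2 / sigma2 * (D * sigma2)) with (Pmax * S ^ 2 * D) in H by (field; lra).
    replace (Pmax / 2 * (Pmax / 2) * S ^ 2 / D * (D * sigma2)) with (Pmax / 2 * (Pmax / 2) * S ^ 2 * sigma2) in H by (field; lra).
    exact H. }
  assert (K2 : 2 * n * Pmax * L0 * (a + b) <= Pmax - 4 * n * sigma2).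
  { assert (HPS : 0 < Pmax * S ^ 2 * sigma2) by (apply Rmult_lt_0_compat; [apply Rmult_lt_0_compat; [lra| apply pow_lt; lra]|lra]).
    apply (Rmult_le_reg_l (Pmax * S ^ 2 * sigma2 / 4)); [lra|].
    unfold D in K. nra. }
  assert (Hab : 0 < 2 * n * Pmax * L0 * (a + b)).
  { assert (0 < n * Pmax * L0) by (repeat apply Rmult_lt_0_compat; lra). nra. }
  split; [lra|].
  apply Rle_ge.
  unfold Rdiv. rewrite Rmult_1_l.
  apply (Rmult_le_reg_r ((a+b) * (Pmax - 4 * n * sigma2))); [nra|].
  replace (/ (a + b) * ((a + b) * (Pmax - 4 * n * sigma2))) with (Pmax - 4 * n * sigma2) by (field; lra).
  replace (2 * n * Pmax * L0 * / (Pmax - 4 * n * sigma2) * ((a + b) * (Pmax - 4 * n * sigma2))) with (2 * n * Pmax * L0 * (a + b)) by (field; lra).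
  exact K2.
Qed.
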